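(* Let $H$ be a finite loopless graph with a marked vertex $v_0$ and $L$ a finite graph with at least $\deg_H(v_0)$ vertices. Let $G$ be obtained from $H$ by deleting $v_0$, adding a disjoint copy of $L$, and attaching each edge of $H$ formerly incident to $v_0$ to a vertex of $L$, distinct edges to distinct vertices. If every two bases of $M(H)$ intersect and every two bases of $M^\star(L)$ intersect, then every two bases of $M(G)$ intersect and every two bases of $M(G)^\star$ intersect.
   Context: $M(K)$ denotes the graphic (cycle) matroid of a graph $K$, whose bases are the edge sets of maximal spanning forests; $M^\star(K)$ is its dual. *)

(* Defs.v *)
From mathcomp Require Import all_boot.
Set Implicit Arguments. Unset Strict Implicit. Unset Printing Implicit Defensive.

Section Graphs.
Variables (V E : finType) (ends : E -> V * V).

Definition incident (v : V) (e : E) : bool := ((ends e).1 == v) || ((ends e).2 == v).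

Definition loopless : Prop := forall e, (ends e).1 != (ends e).2.

(* degree of v in the edge set C (a loop counts twice) *)
Definition degC (C : {set E}) (v : V) : nat :=
  #|[set e in C | (ends e).1 == v]| + #|[set e in C | (ends e).2 == v]|.

(* number of edges incident to v, i.e. deg(v) in a loopless graph *)
Definition deg (v : V) : nat := #|[set e | incident v e]|.

Definition adjC (C : {set E}) : rel E :=
  [rel e f | [&& e \in C, f \in C &
     incident (ends f).1 e || incident (ends f).2 e]].

Definition is_cycle (C : {set E}) : bool :=
  [&& C != set0,
      [forall v, (degC C v == 0) || (degC C v == 2)] &
      [forall e in C, forall f in C, connect (adjC C) e f]].

Definition forest (F : {set E}) : bool :=
  [forall C : {set E}, (C \subset F) ==> ~~ is_cycle C].

(* bases of the cycle matroid M(K): maximal (spanning) forests *)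
Definition graphic_basis (F : {set E}) : bool :=
  forest F && [forall e, (e \notin F) ==> ~~ forest (e |: F)].

(* bases of the dual matroid M*(K): complements of bases of M(K) *)
Definition cographic_basis (F : {set E}) : bool := graphic_basis (~: F).

Definition bases_intersect : Prop :=
  forall B1 B2, graphic_basis B1 -> graphic_basis B2 -> B1 :&: B2 != set0.

Definition cobases_intersect : Prop :=
  forall B1 B2, cographic_basis B1 -> cographic_basis B2 -> B1 :&: B2 != set0.

End Graphs.

(* The graph G: delete v0 from H, add a copy of L, reattach edges at v0 via f *)
Section Construction.
Variables (VH EH VL EL : finType) (endsH : EH -> VH * VH) (endsL : EL -> VL * VL)
          (v0 : VH) (f : EH -> VL).

Definition GV : finType := ({v : VH | v != v0} + VL)%type.
Definition GE : finType := (EH + EL)%type.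

Definition reattach (y : VL) (x : VH) : GV :=
  match (insub x : option {v : VH | v != v0}) with
  | Some u => inl u
  | None => inr y
  end.

Definition endsG (e : GE) : GV * GV :=
  match e with
  | inl e => (reattach (f e) (endsH e).1, reattach (f e) (endsH e).2)
  | inr e => (inr (endsL e).1, inr (endsL e).2)
  end.

End Construction.

(* Main.v *)
Require Import Defs.
From mathcomp Require Import all_boot.
Set Implicit Arguments. Unset Strict Implicit. Unset Printing Implicit Defensive.

Section Gen.
Variables (V E : finType) (ends : E -> V * V).

Definition d1 (e : E) (v : V) : nat := ((ends e).1 == v) + ((ends e).2 == v).

Lemma card_setP (A : {set E}) (p : pred E) : #|[set e in A | p e]| = \sum_(e in A) p e.
Proof.
rewrite -sum1_card [LHS]big_mkcond [RHS]big_mkcond /=.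
apply: eq_bigr => e _; rewrite inE; by case: (e \in A); case: (p e).
Qed.

Lemma degCE (C : {set E}) v : degC ends C v = \sum_(e in C) d1 e v.
Proof. by rewrite /degC !card_setP -big_split. Qed.

Lemma degC0 v : degC ends set0 v = 0.
Proof. by rewrite degCE big_set0. Qed.

Lemma degC1 g v : degC ends [set g] v = d1 g v.
Proof. by rewrite degCE big_set1. Qed.

Lemma degCU1 g (P : {set E}) v : g \notin P -> degC ends (g |: P) v = d1 g v + degC ends P v.
Proof. by move=> gP; rewrite !degCE big_setU1. Qed.

Lemma degCD1 g (C : {set E}) v : g \in C -> degC ends C v = d1 g v + degC ends (C :\ g) v.
Proof.
move=> gC; rewrite !degCE (bigD1 g) //=; congr (_ + _).
by apply: eq_bigl => x; rewrite in_setD1 andbC.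
Qed.

Lemma degC_ge g (C : {set E}) v : g \in C -> d1 g v <= degC ends C v.
Proof. by move=> gC; rewrite (degCD1 v gC) leq_addr. Qed.

Lemma degC_pos (C : {set E}) v : 0 < degC ends C v ->
  exists2 g, g \in C & ((ends g).1 == v) || ((ends g).2 == v).
Proof.
rewrite degCE => H; apply/exists_inP; apply: contraLR H; rewrite negb_exists_in => /forall_inP H.
rewrite -leqNgt leqn0 sum_nat_eq0; apply/forall_inP => x /H; rewrite negb_or /d1.
by case/andP => /negbTE -> /negbTE ->.
Qed.

Lemma adjC_sym (C : {set E}) : symmetric (adjC ends C).
Proof.
move=> e f; rewrite /adjC /incident /=.
case: (e \in C); case: (f \in C) => //=.
by rewrite !(eq_sym (ends f).1) !(eq_sym (ends f).2); do 4 case: eqP.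
Qed.

Lemma adjC_mono (C D : {set E}) : C \subset D -> subrel (adjC ends C) (adjC ends D).
Proof.
move=> /subsetP CD e f; rewrite /adjC /= => /and3P[eC fC H]; by rewrite (CD _ eC) (CD _ fC).
Qed.

Lemma connect_mono (r r' : rel E) : subrel r r' -> subrel (connect r) (connect r').
Proof. by move=> H; apply: connect_sub => x y /H; apply: connect1. Qed.

Lemma forest_sub (A F : {set E}) : forest ends F -> A \subset F -> forest ends A.
Proof.
move=> /forallP H AF; apply/forallP => C; apply/implyP => CA.
by have := H C; rewrite (subset_trans CA AF).
Qed.

Lemma forest0 : forest ends set0.
Proof.
apply/forallP => C; apply/implyP; rewrite subset0 => /eqP ->.
by rewrite /is_cycle eqxx.
Qed.

Lemma extend_forest (S : {set E}) : forall F, forest ends F -> F \subset S ->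
  exists F' : {set E}, [/\ F \subset F', F' \subset S, forest ends F' &
    forall e, e \in S -> e \notin F' -> ~~ forest ends (e |: F')].
Proof.
move=> F; move: {2}#|S :\: F| (leqnn #|S :\: F|) => n; elim: n F => [|n IH] F.
  rewrite leqn0 cards_eq0 => /eqP H0 fF FS; exists F; split => // e eS eF.
  by move: H0 => /setP /(_ e); rewrite !inE eS eF.
move=> Hn fF FS.
case: (pickP [pred e | [&& e \in S, e \notin F & forest ends (e |: F)]]) => [e /and3P[eS eF fe]|H]; last first.
  exists F; split => // e eS eF; by have := H e; rewrite /= eS eF /= => ->.
have Hlt : #|S :\: (e |: F)| <= n.
  rewrite -ltnS; apply: leq_trans Hn; apply: proper_card; rewrite properEneq.
  apply/andP; split; last by apply: setDS; exact: subsetUr.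
  apply/eqP => /setP /(_ e); by rewrite !inE eS eF eqxx.
have Hsub : e |: F \subset S by rewrite subUset sub1set eS FS.
have [F' [h1 h2 h3 h4]] := IH _ Hlt fe Hsub.
exists F'; split => //; apply: subset_trans h1; exact: subsetUr.
Qed.


Definition Rc (F : {set E}) : rel V := fun u v =>
  [exists g, (g \in F) && ((((ends g).1 == u) && ((ends g).2 == v)) ||
                         (((ends g).1 == v) && ((ends g).2 == u)))].

Lemma Rc_sym (F : {set E}) : symmetric (Rc F).
Proof.
move=> u v; apply/existsP/existsP => -[g /andP[gF H]]; exists g; rewrite gF /=;
  by rewrite orbC.
Qed.

Lemma Rc_edge (F : {set E}) g : g \in F -> Rc F (ends g).1 (ends g).2.
Proof. by move=> gF; apply/existsP; exists g; rewrite gF !eqxx. Qed.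

Lemma Rc_edge_ex (F : {set E}) u x : Rc F u x ->
  exists2 g, g \in F & forall v, d1 g v = (u == v) + (x == v).
Proof.
case/existsP => g /andP[gF /orP[/andP[/eqP e1 /eqP e2]|/andP[/eqP e1 /eqP e2]]];
  exists g => // v; by rewrite /d1 e1 e2 // addnC.
Qed.

Lemma adj_share (C : {set E}) a b v : a \in C -> b \in C -> 0 < d1 a v -> 0 < d1 b v ->
  adjC ends C a b.
Proof.
rewrite /d1 /adjC /incident /= => -> -> /=.
by do 4 (case: eqP => [->|]) => //=; rewrite ?eqxx ?orbT.
Qed.

Lemma is_cycleI (C : {set E}) : C != set0 ->
  (forall v, degC ends C v = 0 \/ degC ends C v = 2) ->
  (forall a b, a \in C -> b \in C -> connect (adjC ends C) a b) -> is_cycle ends C.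
Proof.
move=> H0 Hd Hc; rewrite /is_cycle H0 /=; apply/andP; split.
  by apply/forallP => v; case: (Hd v) => ->.
by apply/forall_inP => a aC; apply/forall_inP => b bC; apply: Hc.
Qed.

Lemma cycle_notforest (C F : {set E}) : C \subset F -> is_cycle ends C -> ~~ forest ends F.
Proof. by move=> CF cC; apply/forallP => /(_ C); rewrite CF cC. Qed.

Lemma sum_eqv (a : V) (K : {set V}) : \sum_(v in K) (a == v : nat) = (a \in K).
Proof.
case: (boolP (a \in K)) => aK.
  rewrite (bigD1 a) //= eqxx big1 // => v /andP[_ ne]; by rewrite eq_sym (negbTE ne).
by rewrite big1 // => v vK; case: eqP => // av; rewrite av vK in aK.
Qed.

Lemma notforest_conn (F : {set E}) e : forest ends F -> ~~ forest ends (e |: F) ->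
  connect (Rc F) (ends e).1 (ends e).2.
Proof.
move=> fF; rewrite /forest negb_forall => /existsP[C]; rewrite negb_imply negbK.
case/andP => CeF cC.
have eC : e \in C.
  apply: contraT => eC.
  suff CF : C \subset F by move: (cycle_notforest CF cC); rewrite fF.
  apply/subsetP => x xC; move/subsetP: CeF => /(_ x xC); rewrite in_setU1.
  by case: eqP => [xe|//]; rewrite -xe xC in eC.
set u := (ends e).1; set w := (ends e).2.
case: (eqVneq u w) => [<-|uw]; first exact: connect0.
apply: contraT => nc.
set K := [set v | connect (Rc F) u v].
have wK : w \notin K by rewrite inE.
have uK : u \in K by rewrite inE connect0.
set X := C :\ e.
have XF : X \subset F.
  apply/subsetP => x; rewrite in_setD1 => /andP[xe xC].
  by move/subsetP: CeF => /(_ x xC); rewrite in_setU1 (negbTE xe).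
have symc : connect_sym (Rc F) by apply: sym_connect_sym; exact: Rc_sym.
have Hcl : forall g, g \in X -> ((ends g).1 \in K) = ((ends g).2 \in K).
  move=> g gX; have r := Rc_edge (subsetP XF _ gX); rewrite !inE.
  apply/idP/idP => H; apply: connect_trans H _; last rewrite symc; exact: connect1.
have Hsum : \sum_(v in K) degC ends X v =
            \sum_(g in X) (((ends g).1 \in K) + ((ends g).2 \in K)).
  rewrite (eq_bigr _ (fun v _ => degCE X v)) exchange_big /=.
  apply: eq_bigr => g _; by rewrite /d1 big_split /= !sum_eqv.
have Hev : ~~ odd (\sum_(g in X) (((ends g).1 \in K) + ((ends g).2 \in K))).
  apply: (big_ind (fun n => ~~ odd n)) => //.
    by move=> x y hx hy; rewrite oddD (negbTE hx) (negbTE hy).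
  by move=> g gX; rewrite (Hcl g gX) oddD addbb.
have Hdeg : forall v, degC ends C v = d1 e v + degC ends X v by move=> v; apply: degCD1.
have cyc : forall v, (degC ends C v == 0) || (degC ends C v == 2).
  by move: cC => /and3P[_ /forallP H _].
have Hu : degC ends X u = 1.
  have := Hdeg u; rewrite /d1 -/u -/w eqxx (eq_sym w) (negbTE uw) /= add1n.
  by case/orP: (cyc u) => /eqP -> // [].
have Hev2 : ~~ odd (\sum_(v in K | v != u) degC ends X v).
  apply: (big_ind (fun n => ~~ odd n)) => //.
    by move=> x y hx hy; rewrite oddD (negbTE hx) (negbTE hy).
  move=> v /andP[vK vu].
  have vw : v != w by apply: contraNneq wK => <-.
  have := Hdeg v; rewrite /d1 -/u -/w (eq_sym u) (eq_sym w) (negbTE vu) (negbTE vw) add0n.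
  by case/orP: (cyc v) => /eqP -> <-.
move: Hev; rewrite -Hsum (bigD1 u) //= oddD Hu.
by rewrite (negbTE Hev2).
Qed.


Lemma path_set (F : {set E}) p : forall x u, path (Rc F) u (x :: p) -> uniq (u :: x :: p) ->
  exists P : {set E}, [/\ P \subset F, degC ends P u = 1 /\ degC ends P (last x p) = 1,
     (forall v, v != u -> v != last x p -> (degC ends P v == 0) || (degC ends P v == 2)),
     (forall v, v \notin u :: x :: p -> degC ends P v = 0) &
     (forall a b, a \in P -> b \in P -> connect (adjC ends P) a b)].
Proof.
elim: p => [|y p IH] x u.
  rewrite /= andbT => Rux; rewrite inE andbT => ux.
  have [g gF dg] := Rc_edge_ex Rux.
  exists [set g]; split.
  - by rewrite sub1set.
  - by rewrite !degC1 !dg !eqxx (eq_sym x) (negbTE ux).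
  - by move=> v vu vx; rewrite degC1 dg (eq_sym u) (eq_sym x) (negbTE vu) (negbTE vx).
  - move=> v; rewrite !inE negb_or => /andP[vu vx].
    by rewrite degC1 dg (eq_sym u) (eq_sym x) (negbTE vu) (negbTE vx).
  - by move=> a b; rewrite !inE => /eqP -> /eqP ->; exact: connect0.
move=> /= /andP[Rux pth] /andP[uN un].
have [P [PF [Px Pw] Pin Psup Pcon]] := IH y x pth un.
have [g gF dg] := Rc_edge_ex Rux.
move: uN; rewrite inE negb_or => /andP[ux uN].
have Pu : degC ends P u = 0 by apply: Psup; rewrite inE negb_or ux.
have gP : g \notin P.
  apply/negP => gP; have := degC_ge u gP; by rewrite Pu dg eqxx.
set w := last y p.
have wyp : w \in y :: p by exact: mem_last.
move: un => /= /andP[xN _].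
have wu : w != u by apply: contraNneq uN => <-.
have wx : w != x by apply: contraNneq xN => <-.
have dP : forall v, degC ends (g |: P) v = (u == v) + (x == v) + degC ends P v.
  by move=> v; rewrite degCU1 // dg.
exists (g |: P); split.
- by rewrite subUset sub1set gF PF.
- split; first by rewrite dP Pu eqxx eq_sym (negbTE ux).
  by rewrite dP Pw (eq_sym u) (eq_sym x) (negbTE wu) (negbTE wx).
- move=> v vu vw; rewrite dP (eq_sym u) (negbTE vu).
  case: (eqVneq x v) => [<-|xv]; first by rewrite Px.
  by rewrite /= add0n; apply: Pin; rewrite // eq_sym.
- move=> v; rewrite !inE !negb_or => /and3P[vu vx vr].
  rewrite dP (eq_sym u) (eq_sym x) (negbTE vu) (negbTE vx) /=; apply: Psup.
  by move: vr; rewrite !inE !negb_or vx.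
- have [h0 h0P h0x] := degC_pos (eq_ind_r (fun n => 0 < n) (isT : 0 < 1) Px).
  have adj : adjC ends (g |: P) h0 g.
    apply: (@adj_share _ _ _ x); rewrite ?in_setU1 ?eqxx ?h0P ?orbT //.
      by rewrite /d1; case/orP: h0x => ->; rewrite ?addn1.
    by rewrite dg eqxx addn1.
  have symc : connect_sym (adjC ends (g |: P)) by apply: sym_connect_sym; exact: adjC_sym.
  have toG : forall a, a \in g |: P -> connect (adjC ends (g |: P)) a g.
    move=> a; rewrite in_setU1 => /orP[/eqP ->|aP]; first exact: connect0.
    apply: connect_trans (connect1 adj).
    apply: connect_mono (Pcon _ _ aP h0P); apply: adjC_mono; exact: subsetUr.
  move=> a b aC bC; apply: connect_trans (toG a aC) _; rewrite symc; exact: toG.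
Qed.

Lemma conn_notforest (F : {set E}) e : e \notin F ->
  connect (Rc F) (ends e).1 (ends e).2 -> ~~ forest ends (e |: F).
Proof.
move=> eF; set u := (ends e).1; set w := (ends e).2.
case: (eqVneq u w) => [uw|uw] Hc.
  apply: (@cycle_notforest [set e]); first by rewrite sub1set setU11.
  apply: is_cycleI.
  - by apply/set0Pn; exists e; rewrite inE.
  - by move=> v; rewrite degC1 /d1 -/u -/w uw; case: (w == v); [right|left].
  - by move=> a b; rewrite !inE => /eqP -> /eqP ->; exact: connect0.
case/connectP: Hc => p0 pth0 wl.
case: (shortenP pth0) wl => p pth un _ wl.
case: p pth un wl => [|x p] pth un wl; first by rewrite wl /= eqxx in uw.
have [P [PF [Pu Pw] Pin Psup Pcon]] := path_set pth un.
have uw' : u != last x p by move: uw; rewrite wl.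
have eP : e \notin P by apply: contraNN eF; apply/subsetP.
apply: (@cycle_notforest (e |: P)); first by apply: setUS.
have dC : forall v, degC ends (e |: P) v = (u == v) + (last x p == v) + degC ends P v.
  have wl2 : (ends e).2 = last x p by exact: wl.
  by move=> v; rewrite degCU1 // /d1 wl2.
apply: is_cycleI.
- by apply/set0Pn; exists e; rewrite setU11.
- move=> v; rewrite dC.
  case: (eqVneq u v) => [<-|uv]; first by right; move: Pu uw'; rewrite eq_sym => -> /negbTE ->.
  case: (eqVneq (last x p) v) => [<-|wv]; first by right; rewrite Pw.
  have : (degC ends P v == 0) || (degC ends P v == 2) by apply: Pin; rewrite eq_sym.
  by case/orP => /eqP ->; [left|right].
- have [h0 h0P h0u] := degC_pos (eq_ind_r (fun n => 0 < n) (isT : 0 < 1) Pu).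
  have adj : adjC ends (e |: P) h0 e.
    apply: (@adj_share _ _ _ u); rewrite ?in_setU1 ?eqxx ?h0P ?orbT //.
      by rewrite /d1; case/orP: h0u => ->; rewrite ?addn1.
    by rewrite /d1 -/u eqxx.
  have symc : connect_sym (adjC ends (e |: P)) by apply: sym_connect_sym; exact: adjC_sym.
  have toG : forall a, a \in e |: P -> connect (adjC ends (e |: P)) a e.
    move=> a; rewrite in_setU1 => /orP[/eqP ->|aP]; first exact: connect0.
    apply: connect_trans (connect1 adj).
    apply: connect_mono (Pcon _ _ aP h0P); apply: adjC_mono; exact: subsetUr.
  move=> a b aC bC; apply: connect_trans (toG a aC) _; rewrite symc; exact: toG.
Qed.

Lemma basis_conn (B : {set E}) e : graphic_basis ends B -> connect (Rc B) (ends e).1 (ends e).2.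
Proof.
case/andP => fB /forallP /(_ e) H.
case: (boolP (e \in B)) => eB; first by apply: connect1; apply: Rc_edge.
by apply: notforest_conn => //; move/implyP: H; apply.
Qed.

Lemma conn_basis (F : {set E}) : forest ends F ->
  (forall e, connect (Rc F) (ends e).1 (ends e).2) -> graphic_basis ends F.
Proof.
move=> fF H; rewrite /graphic_basis fF /=; apply/forallP => e; apply/implyP => eF.
exact: conn_notforest.
Qed.


Lemma Rc_sub_conn (S F : {set E}) :
  (forall g, g \in S -> connect (Rc F) (ends g).1 (ends g).2) ->
  forall x y, connect (Rc S) x y -> connect (Rc F) x y.
Proof.
move=> H; apply: connect_sub => x y /existsP[g /andP[gS /orP[]]] /andP[/eqP e1 /eqP e2];
  rewrite -e1 -e2; first exact: H.
by rewrite (sym_connect_sym (@Rc_sym F)); exact: H.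
Qed.

Lemma basis_in (S : {set E}) : (forall e, connect (Rc S) (ends e).1 (ends e).2) ->
  exists2 F : {set E}, F \subset S & graphic_basis ends F.
Proof.
move=> H; have [F [_ FS fF Fmax]] := extend_forest (forest0) (sub0set S).
exists F => //; apply: conn_basis => // e; apply: Rc_sub_conn (H e) => g gS.
case: (boolP (g \in F)) => gF; first by apply: connect1; apply: Rc_edge.
by apply: notforest_conn => //; apply: Fmax.
Qed.

End Gen.

Lemma connect_map (T T' : finType) (r : rel T) (r' : rel T') (h : T -> T') :
  (forall x y, r x y -> connect r' (h x) (h y)) ->
  forall x y, connect r x y -> connect r' (h x) (h y).
Proof.
move=> H x y /connectP[p pth ->]; elim: p x pth => [|z p IH] x /=; first by move=> _; exact: connect0.
by case/andP => rxz /IH; apply: connect_trans; apply: H.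
Qed.

Lemma cycle_embed (V E V' E' : finType) (ends : E -> V * V) (ends' : E' -> V' * V')
  (hv : V -> V') (he : E -> E') : injective hv -> injective he ->
  (forall e, ends' (he e) = (hv (ends e).1, hv (ends e).2)) ->
  forall C, is_cycle ends C -> is_cycle ends' (he @: C).
Proof.
move=> ihv ihe hends C /and3P[C0 /forallP Cd /forall_inP Cc].
have dE : forall v', degC ends' (he @: C) v' = \sum_(e in C) (((hv (ends e).1 == v') : nat) + (hv (ends e).2 == v')).
  move=> v'; rewrite degCE big_imset /=; last by move=> x y _ _; apply: ihe.
  by apply: eq_bigr => e _; rewrite /d1 hends.
rewrite /is_cycle; apply/and3P; split.
- case/set0Pn: C0 => x xC; apply/set0Pn; exists (he x); exact: imset_f.
- apply/forallP => v'; rewrite dE.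
  case: (pickP (fun v => hv v == v')) => [v /eqP <-|nv].
    have := Cd v; rewrite degCE; congr (_ || _); congr (_ == _);
      by apply: eq_bigr => e _; rewrite /d1 !(inj_eq ihv).
  rewrite big1 ?eqxx // => e _; by rewrite !nv.
- apply/forall_inP => a' /imsetP[a aC ->]; apply/forall_inP => b' /imsetP[b bC ->].
  apply: (@connect_map _ _ (adjC ends C)); last by have := Cc a aC; move/forall_inP; apply.
  move=> x y; rewrite /adjC /incident /= => /and3P[xC yC H].
  by apply: connect1; rewrite /= !imset_f // !hends /= !(inj_eq ihv).
Qed.

Theorem proposition6p4 (VH EH VL EL : finType)
  (endsH : EH -> VH * VH) (endsL : EL -> VL * VL) (v0 : VH) (f : EH -> VL) :
  loopless endsH ->
  deg endsH v0 <= #|VL| ->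
  {in [pred e | incident endsH v0 e] &, injective f} ->
  bases_intersect endsH ->
  cobases_intersect endsL ->
  bases_intersect (endsG endsH endsL v0 f) /\
  cobases_intersect (endsG endsH endsL v0 f).
Proof.
move=> _ _ _ bH cL; split.
- move=> B1 B2 bB1 bB2; apply/negP => /eqP H0.
  pose phi (x : GV VL v0) : VH := match x with inl u => val u | inr _ => v0 end.
  have phiR : forall y x, phi (reattach v0 y x) = x.
    move=> y x; rewrite /reattach; case: insubP => [u _ <-|/negPn/eqP ->] //.
  have Hs : forall B, graphic_basis (endsG endsH endsL v0 f) B ->
      exists2 F : {set EH}, F \subset [set e | inl e \in B] & graphic_basis endsH F.
    move=> B bB; apply: basis_in => e.
    have := basis_conn (inl e) bB; rewrite /= -{2}(phiR (f e) (endsH e).1) -{2}(phiR (f e) (endsH e).2).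
    apply: connect_map => x y /existsP[[g|g] /andP[gB Hg]].
      have gS : g \in [set e | inl e \in B] by rewrite inE.
      move: Hg; rewrite /= => /orP[] /andP[/eqP <- /eqP <-]; rewrite !phiR.
        by apply: connect1; apply: Rc_edge.
      by rewrite (sym_connect_sym (@Rc_sym _ _ endsH _)); apply: connect1; apply: Rc_edge.
    by move: Hg; rewrite /= => /orP[] /andP[/eqP <- /eqP <-]; exact: connect0.
  have [F1 F1S bF1] := Hs _ bB1; have [F2 F2S bF2] := Hs _ bB2.
  case/set0Pn: (bH _ _ bF1 bF2) => e; rewrite inE => /andP[e1 e2].
  have := subsetP F1S _ e1; have := subsetP F2S _ e2; rewrite !inE => i2 i1.
  by move/setP: H0 => /(_ (inl e)); rewrite !inE i1 i2.
- move=> C1 C2 cC1 cC2; apply/negP => /eqP H0.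
  have Hs : forall C, cographic_basis (endsG endsH endsL v0 f) C ->
      exists2 B' : {set EL}, [set e | inr e \in ~: C] \subset B' & cographic_basis endsL (~: B').
    move=> C cC.
    have fD : forest endsL [set e | inr e \in ~: C].
      apply/forallP => Cy; apply/implyP => CyD; apply/negP => cyc.
      have cyc' := @cycle_embed _ _ _ _ endsL (endsG endsH endsL v0 f) inr inr
        (fun x y (H : inr x = inr y) => ltac:(by case: H)) (fun x y (H : inr x = inr y) => ltac:(by case: H))
        (fun e => erefl) Cy cyc.
      move: cC => /andP[fC _]; move: fC; apply/negP; apply: (cycle_notforest _ cyc').
      apply/subsetP => x /imsetP[y yCy ->]; by have := subsetP CyD _ yCy; rewrite inE.
    have [B' [DB' _ fB' mB']] := extend_forest fD (subsetT _).
    exists B' => //; rewrite /cographic_basis setCK /graphic_basis fB' /=.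
    by apply/forallP => e; apply/implyP; apply: mB'.
  have [B1 D1 cB1] := Hs _ cC1; have [B2 D2 cB2] := Hs _ cC2.
  case/set0Pn: (cL _ _ cB1 cB2) => e; rewrite !inE => /andP[e1 e2].
  have i1 : inr e \in C1.
    apply: contraNT e1 => h; apply: (subsetP D1); by rewrite !inE.
  have i2 : inr e \in C2.
    apply: contraNT e2 => h; apply: (subsetP D2); by rewrite !inE.
  by move/setP: H0 => /(_ (inr e)); rewrite !inE i1 i2.
Qed.
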